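(* For any integers $k_1<k_2$, the function $\sin:(k_1\pi,k_2\pi)\to\mathbb{R}$ is amenable.
   Context: Relative distance on $\mathbb{R}$: $\mathrm{dist}(x,y)=0$ if $x=y=0$, $\mathrm{dist}(x,y)=|\log(y/x)|$ if $xy>0$, and $\mathrm{dist}(x,y)=\infty$ otherwise. For a real analytic function $f$ on an open set $\Omega\subseteq\mathbb{R}$, not identically zero, the condition number is $\kappa(f,x)=0$ if $x=0$, $\kappa(f,x)=\infty$ if $x\neq0$ and $f(x)=0$, and $\kappa(f,x)=|x|\,|f'(x)|/|f(x)|$ otherwise; $\mu(f,x)=1+\kappa(f,x)$. $f:\Omega\to\mathbb{R}$ is amenable if there is $C>0$ such that for every $x\in\Omega$ with $\kappa(f,x)<\infty$, the set $B_x=\{y\in\mathbb{R}:\mathrm{dist}(y,x)<1/(C\mu(f,x))\}$ is contained in $\Omega$ and $\mu(f,y)\leq C\mu(f,x)$ for all $y\in B_x$. *)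

(* Defs.v *)
From Stdlib Require Import Reals.
From Coquelicot Require Import Coquelicot.
Open Scope R_scope.

Definition rel_dist (x y : R) : Rbar :=
  if Req_EM_T x 0 then
    (if Req_EM_T y 0 then Finite 0 else p_infty)
  else if Rlt_dec 0 (x * y) then Finite (Rabs (ln (y / x)))
  else p_infty.

Definition kappa (f : R -> R) (x : R) : Rbar :=
  if Req_EM_T x 0 then Finite 0
  else if Req_EM_T (f x) 0 then p_infty
  else Finite (Rabs x * Rabs (Derive f x) / Rabs (f x)).

Definition mu (f : R -> R) (x : R) : Rbar := Rbar_plus (Finite 1) (kappa f x).

Definition amenable (f : R -> R) (Omega : R -> Prop) : Prop :=
  exists C : R, 0 < C /\
    forall x : R, Omega x -> is_finite (kappa f x) ->
      forall y : R,
        Rbar_lt (rel_dist y x) (Finite (1 / (C * real (mu f x)))) ->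
        Omega y /\ Rbar_le (mu f y) (Rbar_mult (Finite C) (mu f x)).

(* Main.v *)
Require Import Defs.
From Stdlib Require Import Reals ZArith Lra Psatz.
From Coquelicot Require Import Coquelicot.
Open Scope R_scope.

Lemma ln_bound (q eps : R) : 0 < q -> Rabs (ln q) < eps -> eps <= 1/2 ->
  Rabs (q - 1) <= 2 * eps.
Proof.
  intros Hq Hl He.
  assert (h1 : 1 + ln q <= q).
  { rewrite <- (exp_ln q Hq) at 2. apply exp_ineq1_le. }
  assert (Hu : 0 < / q) by (apply Rinv_0_lt_compat; lra).
  assert (h2 : 1 + ln (/ q) <= / q).
  { rewrite <- (exp_ln (/ q) Hu) at 2. apply exp_ineq1_le. }
  rewrite ln_Rinv in h2 by lra.
  assert (hqu : q * / q = 1) by (field; lra).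
  apply Rabs_def2 in Hl. destruct Hl as [Hl1 Hl2].
  apply Rabs_le. split.
  - nra.
  - destruct (Rle_or_lt q 1); [lra|]. nra.
Qed.

Lemma lip_sin (a b : R) : Rabs (sin b - sin a) <= Rabs (b - a).
Proof.
  destruct (MVT_abs sin cos a b) as [c [Hc _]].
  { intros; apply derivable_pt_lim_sin. }
  rewrite Hc. assert (Rabs (cos c) <= 1) by (apply Rabs_le; apply COS_bound).
  pose proof (Rabs_pos (b - a)). nra.
Qed.

Lemma lip_cos (a b : R) : Rabs (cos b - cos a) <= Rabs (b - a).
Proof.
  destruct (MVT_abs cos (fun x => - sin x) a b) as [c [Hc _]].
  { intros; apply derivable_pt_lim_cos. }
  rewrite Hc. assert (Rabs (- sin c) <= 1) by (rewrite Rabs_Ropp; apply Rabs_le; apply SIN_bound).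
  pose proof (Rabs_pos (b - a)). nra.
Qed.

Lemma div_helper (Y S Z T : R) : 0 < S -> 0 < T -> Y * T <= Z * S -> Y / S <= Z / T.
Proof.
  intros HS HT H.
  apply (Rmult_le_reg_r (S * T)); [nra|].
  replace (Y / S * (S * T)) with (Y * T) by (field; lra).
  replace (Z / T * (S * T)) with (Z * S) by (field; lra).
  exact H.
Qed.

Lemma mu_sin (x : R) : x <> 0 -> sin x <> 0 ->
  mu sin x = Finite (1 + Rabs x * Rabs (cos x) / Rabs (sin x)).
Proof.
  intros Hx Hs. unfold mu, kappa.
  destruct (Req_EM_T x 0); [contradiction|].
  destruct (Req_EM_T (sin x) 0); [contradiction|].
  rewrite (is_derive_unique _ _ _ (is_derive_sin x)). reflexivity.
Qed.

Theorem mainTheorem9 (k1 k2 : Z) (hk : (k1 < k2)%Z) :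
  amenable sin (fun x => IZR k1 * PI < x < IZR k2 * PI).
Proof.
  pose proof PI_RGT_0 as HPI.
  set (M := (Rabs (IZR k1) + Rabs (IZR k2)) * PI).
  set (K := M + 1).
  assert (HM : 0 <= M).
  { unfold M. pose proof (Rabs_pos (IZR k1)). pose proof (Rabs_pos (IZR k2)). nra. }
  set (C := 4 * K + 5).
  exists C. split; [unfold C, K; lra|].
  intros x Hx Hfin y Hd.
  assert (Hax : Rabs x <= M).
  { pose proof (Rle_abs (IZR k2)). pose proof (Rle_abs (- IZR k1)).
    rewrite Rabs_Ropp in H0.
    assert (IZR k2 * PI <= Rabs (IZR k2) * PI) by (apply Rmult_le_compat_r; lra).
    assert (- IZR k1 * PI <= Rabs (IZR k1) * PI) by (apply Rmult_le_compat_r; lra).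
    pose proof (Rabs_pos (IZR k1)). pose proof (Rabs_pos (IZR k2)).
    apply Rabs_le. unfold M. split; nra. }
  destruct (Req_EM_T x 0) as [Hx0 | Hx0].
  - subst x. unfold rel_dist in Hd.
    destruct (Req_EM_T y 0) as [Hy0 | Hy0].
    + subst y. split; [exact Hx|].
      unfold mu, kappa. destruct (Req_EM_T 0 0); [|contradiction].
      simpl. unfold C, K. lra.
    + destruct (Req_EM_T 0 0); [|contradiction].
      destruct (Rlt_dec 0 (y * 0)). { rewrite Rmult_0_r in r. lra. }
      simpl in Hd. contradiction.
  - assert (Hs0 : sin x <> 0).
    { intro E. unfold kappa in Hfin.
      destruct (Req_EM_T x 0); [contradiction|].
      destruct (Req_EM_T (sin x) 0); [|contradiction].
      unfold is_finite in Hfin. simpl in Hfin. discriminate. }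
    rewrite (mu_sin x Hx0 Hs0) in Hd |- *.
    set (a := Rabs x) in *. set (s := Rabs (sin x)). set (c := Rabs (cos x)).
    set (mx := 1 + a * c / s) in *.
    assert (Hs : 0 < s) by (apply Rabs_pos_lt; exact Hs0).
    assert (Hc : 0 <= c) by apply Rabs_pos.
    assert (Ha : 0 < a) by (apply Rabs_pos_lt; exact Hx0).
    assert (Hs1 : s <= 1) by (apply Rabs_le; apply SIN_bound).
    assert (Hc1 : c <= 1) by (apply Rabs_le; apply COS_bound).
    assert (Hsc : s * s + c * c = 1).
    { unfold s, c. rewrite <- !Rabs_mult. rewrite !Rabs_right.
      - pose proof (sin2_cos2 x). unfold Rsqr in H. lra.
      - apply Rle_ge. nra.
      - apply Rle_ge. nra. }
    set (L := s + a * c).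
    assert (HmxL : mx * s = L) by (unfold mx, L; field; lra).
    assert (Hmx1 : 1 <= mx).
    { unfold mx. assert (0 <= a * c / s) by (apply Rdiv_le_0_compat; nra). lra. }
    assert (HaKL : a <= K * L).
    { assert (HL0 : 0 <= L) by (unfold L; nra).
      destruct (Rle_or_lt a 1).
      - assert (a <= L).
        { unfold L. assert (0 <= s * (1 - a * s)) by (apply Rmult_le_pos; nra).
          assert (0 <= a * c * (1 - c)) by (apply Rmult_le_pos; nra). nra. }
        unfold K. nra.
      - assert (1 <= L).
        { unfold L. assert (c <= a * c) by nra. nra. }
        unfold K. nra. }
    unfold rel_dist in Hd.
    destruct (Req_EM_T y 0) as [Hy0 | Hy0].
    { destruct (Req_EM_T x 0); [contradiction|]. simpl in Hd. contradiction. }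
    destruct (Rlt_dec 0 (y * x)) as [Hyx | Hyx]; [|simpl in Hd; contradiction].
    simpl in Hd.
    set (eps := 1 / (C * mx)) in *.
    assert (HCpos : 9 <= C) by (unfold C, K; lra).
    assert (Heps : eps * (C * mx) = 1) by (unfold eps; field; nra).
    assert (Heps0 : 0 < eps) by (unfold eps; apply Rdiv_lt_0_compat; nra).
    assert (H9 : 9 <= C * mx) by nra.
    assert (Heps2 : eps <= 1/2).
    { assert (0 <= eps * (C * mx - 9)) by (apply Rmult_le_pos; lra). nra. }
    assert (Hq : 0 < y / x).
    { replace (y / x) with (y * x / (x * x)) by (field; auto).
      apply Rdiv_lt_0_compat; [exact Hyx|]. nra. }
    assert (Hln : Rabs (ln (y / x)) < eps).
    { replace (x / y) with (/ (y / x)) in Hd by (field; auto).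
      rewrite ln_Rinv in Hd by exact Hq. rewrite Rabs_Ropp in Hd. exact Hd. }
    pose proof (ln_bound _ _ Hq Hln Heps2) as Hq1.
    set (d := Rabs (y - x)).
    assert (Hd2 : d <= 2 * eps * a).
    { unfold d, a. replace (y - x) with (x * (y / x - 1)) by (field; auto).
      rewrite Rabs_mult. pose proof (Rabs_pos x). nra. }
    assert (HdL : eps * C * L = s) by nra.
    assert (Hds : d <= s / 2).
    { assert (eps * a <= eps * (K * L)) by (apply Rmult_le_compat_l; lra).
      assert (HL0 : 0 <= L) by (unfold L; nra).
      assert (eps * (4 * K) * L <= eps * C * L).
      { apply Rmult_le_compat_r; [lra|]. apply Rmult_le_compat_l; unfold C; lra. }
      nra. }
    assert (Hd0 : 0 <= d) by apply Rabs_pos.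
    split.
    + destruct Hx as [Hx1 Hx2].
      assert (S1 : s <= x - IZR k1 * PI).
      { pose proof (lip_sin (IZR k1 * PI) x) as Hl.
        rewrite (sin_eq_0_1 (IZR k1 * PI)) in Hl by (exists k1; reflexivity).
        rewrite Rminus_0_r in Hl. rewrite (Rabs_right (x - IZR k1 * PI)) in Hl by lra. exact Hl. }
      assert (S2 : s <= IZR k2 * PI - x).
      { pose proof (lip_sin x (IZR k2 * PI)) as Hl.
        rewrite (sin_eq_0_1 (IZR k2 * PI)) in Hl by (exists k2; reflexivity).
        rewrite Rminus_0_l, Rabs_Ropp in Hl. rewrite (Rabs_right (IZR k2 * PI - x)) in Hl by lra. exact Hl. }
      assert (Hyb : x - d <= y <= x + d) by (apply Rabs_le_between'; unfold d; lra).
      lra.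
    + assert (Hsy : s / 2 <= Rabs (sin y)).
      { pose proof (lip_sin x y) as Hl. fold d in Hl.
        pose proof (Rabs_triang_inv (sin x) (sin y)) as T.
        rewrite Rabs_minus_sym in T.
        fold s in T. lra. }
      assert (Hsy0 : sin y <> 0).
      { intro E. rewrite E, Rabs_R0 in Hsy. lra. }
      rewrite (mu_sin y Hy0 Hsy0). simpl.
      assert (Hay : Rabs y <= a + d).
      { unfold d, a. pose proof (Rabs_triang_inv y x). lra. }
      assert (Hcy : Rabs (cos y) <= c + d).
      { pose proof (lip_cos x y) as Hl. fold d in Hl.
        pose proof (Rabs_triang_inv (cos y) (cos x)). fold c in H. lra. }
      set (P := (a + d) * (c + d)).
      assert (HY : Rabs y * Rabs (cos y) / Rabs (sin y) <= P / (s / 2)).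
      { apply div_helper; [lra|lra|].
        pose proof (Rabs_pos y). pose proof (Rabs_pos (cos y)).
        assert (Rabs y * Rabs (cos y) <= P) by (unfold P; apply Rmult_le_compat; lra).
        assert (0 <= P) by (unfold P; nra).
        nra. }
      assert (HaK : a <= K) by (unfold K; lra).
      assert (HP : s + 2 * P <= C * L).
      { assert (T1 : d * (a + c + d) <= (s / 2) * (K + 2)) by (apply Rmult_le_compat; lra).
        assert (T2 : P = a * c + d * (a + c + d)) by (unfold P; ring).
        assert (T3 : 0 <= a * c) by nra.
        assert (T4 : (K + 3) * s <= C * s) by (apply Rmult_le_compat_r; unfold C; lra).
        assert (T5 : 2 * (a * c) <= C * (a * c)) by (apply Rmult_le_compat_r; lra).
        unfold L. lra. }
      assert (E1 : 1 + P / (s / 2) = (s + 2 * P) / s) by (field; lra).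
      assert (E2 : C * mx = C * L / s) by (rewrite <- HmxL; field; lra).
      rewrite E2.
      apply Rle_trans with ((s + 2 * P) / s); [lra|].
      apply Rmult_le_compat_r; [apply Rlt_le, Rinv_0_lt_compat; lra|]. exact HP.
Qed.
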